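(* Let $h\in\widehat{\operatorname{IET}^{\bowtie}}$. Then there exist $f,g\in\widehat{\operatorname{IET}^{+}_{\mathrm{rc}}}$, finite products of flips $r,s$, and finitely supported permutations $\sigma,\tau$ of $[0,1[$ such that $h=r\sigma f=g\tau s$.
   Context: $X=[0,1[$. $\widehat{\operatorname{IET}^{\bowtie}}$ is the group of bijections $f:X\to X$ for which there is a finite partition of $X$ into intervals $[a,b[$ such that on each open interval $]a,b[$, $f$ is of the form $x\mapsto x+c$ or $x\mapsto -x+c$. $\widehat{\operatorname{IET}^{+}}$ is the subgroup of those for which only the form $x\mapsto x+c$ occurs, and $\widehat{\operatorname{IET}^{+}_{\mathrm{rc}}}$ is the subgroup of right-continuous elements of $\widehat{\operatorname{IET}^{+}}$. For a nonempty interval $I=[a,b[\subseteq X$, the $I$-flip is the bijection of $X$ which maps $x\mapsto a+b-x$ on $]a,b[$ and fixes every other point of $X$ (including $a$); a flip is an $I$-flip for some such $I$. *)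

(* Defs.v *)
From Stdlib Require Import Reals List.
Open Scope R_scope.

Definition inX (x : R) : Prop := 0 <= x < 1.

(* f : R -> R, restricted to X, is a bijection X -> X (values off X are irrelevant). *)
Definition bijX (f : R -> R) : Prop :=
  (forall x, inX x -> inX (f x)) /\
  (forall x y, inX x -> inX y -> f x = f y -> x = y) /\
  (forall y, inX y -> exists x, inX x /\ f x = y).

Definition partitionX (n : nat) (a : nat -> R) : Prop :=
  a 0%nat = 0 /\ a n = 1 /\ (forall i, (i < n)%nat -> a i < a (S i)).

Definition IET_bowtie (f : R -> R) : Prop :=
  bijX f /\
  exists n a, partitionX n a /\
    forall i, (i < n)%nat -> exists c,
      (forall x, a i < x < a (S i) -> f x = x + c) \/
      (forall x, a i < x < a (S i) -> f x = - x + c).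

Definition IET_plus (f : R -> R) : Prop :=
  bijX f /\
  exists n a, partitionX n a /\
    forall i, (i < n)%nat -> exists c,
      (forall x, a i < x < a (S i) -> f x = x + c).

Definition right_continuous_X (f : R -> R) : Prop :=
  forall x, inX x -> forall eps, 0 < eps -> exists delta, 0 < delta /\
    forall y, inX y -> x <= y < x + delta -> Rabs (f y - f x) < eps.

Definition IET_plus_rc (f : R -> R) : Prop := IET_plus f /\ right_continuous_X f.

Definition flip (a b : R) (x : R) : R :=
  if Rlt_dec a x then (if Rlt_dec x b then a + b - x else x) else x.

(* a flip is an I-flip for a nonempty interval I = [a,b[ included in X *)
Definition valid_interval (p : R * R) : Prop :=
  0 <= fst p /\ fst p < snd p /\ snd p <= 1.

(* composition of the flips in the list (head is applied last) *)
Definition flips_prod (l : list (R * R)) (x : R) : R :=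
  fold_right (fun p y => flip (fst p) (snd p) y) x l.

Definition flip_product (r : R -> R) : Prop :=
  exists l : list (R * R), Forall valid_interval l /\
    forall x, inX x -> r x = flips_prod l x.

Definition fin_supp_perm (s : R -> R) : Prop :=
  bijX s /\ exists L : list R, forall x, inX x -> s x <> x -> In x L.

(* Main.v *)
Require Import Defs.
From Stdlib Require Import Reals List Lra Lia ClassicalEpsilon.
Open Scope R_scope.

Lemma Rmin_facts a b : Rmin a b <= a /\ Rmin a b <= b /\ (Rmin a b = a \/ Rmin a b = b).
Proof. unfold Rmin; destruct (Rle_dec a b); lra. Qed.

Lemma part_mono n a : partitionX n a -> forall i j, (i < j)%nat -> (j <= n)%nat -> a i < a j.
Proof.
  intros [H0 [Hn Hs]] i j Hij. induction Hij; intros Hj.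
  - apply Hs; lia.
  - apply Rlt_trans with (a m). apply IHHij; lia. apply Hs; lia.
Qed.

Lemma part_le n a : partitionX n a -> forall i j, (i <= j)%nat -> (j <= n)%nat -> a i <= a j.
Proof.
  intros P i j Hij Hj. destruct (Nat.eq_dec i j). subst; lra.
  left; apply (part_mono n a P); lia.
Qed.

Lemma part_bounds n a : partitionX n a -> forall i, (i <= n)%nat -> 0 <= a i <= 1.
Proof.
  intros P i Hi. pose proof (part_le n a P 0 i ltac:(lia) Hi) as A.
  pose proof (part_le n a P i n Hi ltac:(lia)) as B.
  destruct P as [H0 [Hn _]]. rewrite H0 in A. rewrite Hn in B. lra.
Qed.

Lemma cover_aux n a : partitionX n a -> forall m z, (m <= n)%nat -> a 0%nat <= z < a m ->
  exists i, (i < m)%nat /\ a i <= z < a (S i).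
Proof.
  intros P m z. induction m as [|m IH]; intros Hm Hz. lra.
  destruct (Rlt_or_le z (a m)) as [H|H].
  - destruct IH as [i [Hi Hi']]. lia. lra. exists i; split; [lia|auto].
  - exists m. split; [lia|lra].
Qed.

Lemma cover n a : partitionX n a -> forall z, inX z -> exists i, (i < n)%nat /\ a i <= z < a (S i).
Proof.
  intros P z Hz. assert (P' := P). destruct P' as [H0 [Hn _]].
  apply (cover_aux n a P n z); [lia|]. unfold inX in Hz. rewrite H0, Hn. lra.
Qed.

Lemma piece_unique n a : partitionX n a -> forall i j x, (i < n)%nat -> (j < n)%nat ->
  a i < x < a (S i) -> a j < x < a (S j) -> i = j.
Proof.
  intros P i j x Hi Hj Hx Hy. destruct (Nat.lt_total i j) as [H|[H|H]]; auto.
  - pose proof (part_le n a P (S i) j ltac:(lia) ltac:(lia)). lra.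
  - pose proof (part_le n a P (S j) i ltac:(lia) ltac:(lia)). lra.
Qed.

Definition inv (f : R -> R) (y : R) : R := epsilon (inhabits 0) (fun x => inX x /\ f x = y).

Lemma inv_spec f y : bijX f -> inX y -> inX (inv f y) /\ f (inv f y) = y.
Proof. intros [_ [_ S]] Hy. unfold inv. apply epsilon_spec. apply S; auto. Qed.

Lemma inv_l f x : bijX f -> inX x -> inv f (f x) = x.
Proof.
  intros B Hx. pose proof (inv_spec f (f x) B (proj1 B x Hx)) as [H1 H2].
  apply (proj1 (proj2 B)); auto.
Qed.

Lemma bijX_comp f g : bijX f -> bijX g -> bijX (fun x => f (g x)).
Proof.
  intros [Mf [If Sf]] [Mg [Ig Sg]]. split; [|split].
  - intros x Hx; auto.
  - intros x y Hx Hy E. apply Ig; auto.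
  - intros y Hy. destruct (Sf y Hy) as [x1 [H1 E1]]. destruct (Sg x1 H1) as [x [H E]].
    exists x. split; auto. rewrite E; auto.
Qed.

Lemma bijX_inv f : bijX f -> bijX (inv f).
Proof.
  intros B. split; [|split].
  - intros x Hx. apply (inv_spec f x B Hx).
  - intros x y Hx Hy E. destruct (inv_spec f x B Hx) as [_ Ex].
    destruct (inv_spec f y B Hy) as [_ Ey]. rewrite <- Ex, <- Ey, E. reflexivity.
  - intros y Hy. exists (f y). split. apply (proj1 B); auto. apply inv_l; auto.
Qed.

Lemma invol_bij r : (forall x, inX x -> inX (r x)) -> (forall x, r (r x) = x) -> bijX r.
Proof.
  intros M I. split; [|split]; auto.
  - intros x y _ _ E. rewrite <- (I x), <- (I y), E. reflexivity.
  - intros y Hy. exists (r y). split; auto.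
Qed.

Fixpoint minpos (g : nat -> R) (m : nat) (d : R) : R :=
  match m with
  | O => d
  | S m' => if Rlt_dec 0 (g m') then Rmin (g m') (minpos g m' d) else minpos g m' d
  end.

Lemma minpos_spec g d : 0 < d -> forall m, 0 < minpos g m d /\ minpos g m d <= d /\
  forall i, (i < m)%nat -> 0 < g i -> minpos g m d <= g i.
Proof.
  intros Hd m. induction m as [|m [A [B C]]]; simpl.
  - repeat split; try lra. intros; lia.
  - destruct (Rlt_dec 0 (g m)) as [H|H].
    + pose proof (Rmin_facts (g m) (minpos g m d)) as [F1 [F2 F3]].
      repeat split; try lra.
      intros i Hi Hg. destruct (Nat.eq_dec i m). subst; lra.
      pose proof (C i ltac:(lia) Hg). lra.
    + repeat split; try lra.
      intros i Hi Hg. destruct (Nat.eq_dec i m). subst; lra.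
      apply C; auto; lia.
Qed.

Definition RCp (k : R -> R) (x c : R) : Prop :=
  exists d, 0 < d /\ forall t, 0 < t < d -> k (x + t) = x + t + c.
Definition cc k x := epsilon (inhabits 0) (fun c => RCp k x c).
Definition frc k x := x + cc k x.

Lemma RC_unique k x c1 c2 : RCp k x c1 -> RCp k x c2 -> c1 = c2.
Proof.
  intros [d1 [P1 H1]] [d2 [P2 H2]].
  pose proof (Rmin_facts d1 d2) as [F1 [F2 F3]].
  set (t := Rmin d1 d2 / 2).
  assert (0 < t) by (unfold t; destruct F3 as [F|F]; rewrite F; lra).
  specialize (H1 t ltac:(unfold t in *; lra)). specialize (H2 t ltac:(unfold t in *; lra)).
  lra.
Qed.

Lemma frc_piece k (l u c x : R) : (forall y, l < y < u -> k y = y + c) -> l <= x < u -> frc k x = x + c.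
Proof.
  intros Hk Hx. assert (RC: RCp k x c).
  { exists (u - x). split. lra. intros t Ht. apply Hk. lra. }
  unfold frc. f_equal. apply (RC_unique k x); auto. unfold cc. apply epsilon_spec. exists c; auto.
Qed.

Lemma rc_decomp (k : R -> R) : IET_plus k ->
  IET_plus_rc (frc k) /\
  (exists sigma, fin_supp_perm sigma /\ forall x, inX x -> k x = sigma (frc k x)) /\
  (exists tau, fin_supp_perm tau /\ forall x, inX x -> k x = frc k (tau x)).
Proof.
  intros [Bk [n [a [P H]]]].
  set (f := frc k).
  assert (Pin : forall i y, (i < n)%nat -> a i <= y < a (S i) -> inX y).
  { intros i y Hi Hy. pose proof (part_bounds n a P i ltac:(lia)).
    pose proof (part_bounds n a P (S i) ltac:(lia)). unfold inX. lra. }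
  assert (Hlt : forall i, (i < n)%nat -> a i < a (S i)).
  { intros i Hi. apply (part_mono n a P); lia. }
  assert (Fp : forall x, inX x -> exists i c, (i < n)%nat /\ a i <= x < a (S i) /\
     (forall y, a i < y < a (S i) -> k y = y + c) /\ f x = x + c).
  { intros x Hx. destruct (cover n a P x Hx) as [i [Hi Hxi]]. destruct (H i Hi) as [c Hc].
    exists i, c. repeat split; auto; try lra. apply (frc_piece k _ _ c x Hc Hxi). }
  destruct Bk as [Mk [Ik Sk]].
  assert (Bf : bijX f).
  { split; [|split].
    - intros x Hx. destruct (Fp x Hx) as [i [c [Hi [Hxi [Hc Hf]]]]]. rewrite Hf.
      pose proof (Hlt i Hi).
      split.
      + destruct (Rlt_or_le (x + c) 0) as [N|N]; auto.
        pose proof (Rmin_facts ((a (S i) - x)/2) (-(x+c)/2)) as [F1 [F2 F3]].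
        set (t := Rmin ((a (S i) - x)/2) (-(x+c)/2)) in *.
        assert (0 < t) by (destruct F3 as [F|F]; rewrite F; lra).
        assert (Hk := Hc (x + t) ltac:(lra)).
        assert (Hm := Mk (x + t) (Pin i (x+t) Hi ltac:(lra))). unfold inX in Hm. lra.
      + set (t := (a (S i) - x)/2).
        assert (Hk := Hc (x + t) ltac:(unfold t; lra)).
        assert (Hm := Mk (x + t) (Pin i (x+t) Hi ltac:(unfold t; lra))). unfold inX in Hm.
        unfold t in *; lra.
    - intros x y Hx Hy E.
      destruct (Fp x Hx) as [i [c [Hi [Hxi [Hc Hf]]]]].
      destruct (Fp y Hy) as [j [c' [Hj [Hyj [Hc' Hf']]]]].
      pose proof (Rmin_facts (a (S i) - x) (a (S j) - y)) as [F1 [F2 F3]].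
      set (t := Rmin (a (S i) - x) (a (S j) - y) / 2) in *.
      assert (0 < t) by (unfold t; destruct F3 as [F|F]; rewrite F; lra).
      assert (E1 := Hc (x + t) ltac:(unfold t in *; lra)).
      assert (E2 := Hc' (y + t) ltac:(unfold t in *; lra)).
      assert (x + t = y + t).
      { apply Ik. apply (Pin i); [auto|unfold t in *; lra]. apply (Pin j); [auto|unfold t in *; lra].
        rewrite E1, E2. lra. }
      lra.
    - intros y Hy. unfold inX in Hy.
      set (v1 := fun i => f (a i) - y). set (v2 := fun i => k (a i) - y).
      destruct (minpos_spec v1 (1 - y) ltac:(lra) n) as [A1 [B1 C1]].
      set (m1 := minpos v1 n (1 - y)) in *.
      destruct (minpos_spec v2 m1 A1 n) as [A2 [B2 C2]].
      set (m := minpos v2 n m1) in *.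
      destruct (Sk (y + m/2) ltac:(unfold inX; lra)) as [z [Hz Ez]].
      destruct (Fp z Hz) as [i [c [Hi [Hzi [Hc Hf]]]]].
      destruct (Req_dec z (a i)) as [Ez'|Ez'].
      + subst z. assert (0 < v2 i) by (unfold v2; lra).
        pose proof (C2 i Hi H0). unfold v2 in H1. lra.
      + assert (Kz := Hc z ltac:(lra)).
        assert (Fa : f (a i) = a i + c).
        { apply (frc_piece k (a i) (a (S i)) c); auto. pose proof (Hlt i Hi); lra. }
        assert (a i + c - y <= 0).
        { destruct (Rlt_or_le 0 (v1 i)) as [N|N].
          - pose proof (C1 i Hi N). unfold v1 in *. lra.
          - unfold v1 in N. lra. }
        exists (y - c). split.
        * apply (Pin i); [auto|lra].
        * unfold f. rewrite (frc_piece k (a i) (a (S i)) c); auto; lra. }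
  split; [|split].
  - split.
    + split; auto. exists n, a. split; auto. intros i Hi. destruct (H i Hi) as [c Hc].
      exists c. intros x Hx. apply (frc_piece k (a i) (a (S i)) c); auto. lra.
    + intros x Hx eps He. destruct (Fp x Hx) as [i [c [Hi [Hxi [Hc Hf]]]]].
      pose proof (Rmin_facts eps (a (S i) - x)) as [F1 [F2 F3]].
      exists (Rmin eps (a (S i) - x)). split.
      * destruct F3 as [F|F]; rewrite F; lra.
      * intros y Hy Hxy.
        assert (Fy : f y = y + c) by (apply (frc_piece k (a i) (a (S i)) c y Hc); lra).
        rewrite Fy, Hf.
        replace (y + c - (x + c)) with (y - x) by ring.
        rewrite Rabs_right; lra.
  - exists (fun y => k (inv f y)). split.
    + split. apply bijX_comp. split; auto. apply bijX_inv; auto.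
      exists (map (fun i => f (a i)) (seq 0 n)). intros y Hy Hne.
      destruct (inv_spec f y Bf Hy) as [Hx Hfx].
      destruct (Fp _ Hx) as [i [c [Hi [Hxi [Hc Hf]]]]].
      destruct (Req_dec (inv f y) (a i)) as [E|E].
      * apply in_map_iff. exists i. split. rewrite <- E; auto. apply in_seq. lia.
      * exfalso. apply Hne. rewrite Hc by lra. rewrite <- Hf. auto.
    + intros x Hx. fold f. rewrite inv_l; auto.
  - exists (fun x => inv f (k x)). split.
    + split. apply bijX_comp. apply bijX_inv; auto. split; auto.
      exists (map a (seq 0 n)). intros x Hx Hne.
      destruct (Fp _ Hx) as [i [c [Hi [Hxi [Hc Hf]]]]].
      destruct (Req_dec x (a i)) as [E|E].
      * apply in_map_iff. exists i. split. auto. apply in_seq. lia.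
      * exfalso. apply Hne. rewrite Hc by lra. rewrite <- Hf. apply inv_l; auto.
    + intros x Hx. fold f. symmetry. apply (inv_spec f (k x) Bf). auto.
Qed.

Definition disjoint (p q : R * R) : Prop := forall x, ~ (fst p < x < snd p /\ fst q < x < snd q).

Fixpoint Lrec (P : nat -> Prop) (I : nat -> R * R) (m : nat) : list (R * R) :=
  match m with
  | O => nil
  | S m' => (if excluded_middle_informative (P m') then I m' :: nil else nil) ++ Lrec P I m'
  end.

Lemma Lrec_in (P : nat -> Prop) I m q : In q (Lrec P I m) -> exists j, (j < m)%nat /\ P j /\ q = I j.
Proof.
  induction m as [|m IH]; simpl; intros Hq. contradiction.
  apply in_app_or in Hq. destruct Hq as [Hq|Hq].
  - destruct (excluded_middle_informative (P m)) as [Pm|Pm]; simpl in Hq.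
    + destruct Hq as [Hq|Hq]; [|contradiction]. exists m; auto.
    + contradiction.
  - destruct (IH Hq) as [j [Hj Pj]]. exists j; split; auto.
Qed.

Definition Ldisj (P : nat -> Prop) I m := forall j l, (j < m)%nat -> (l < m)%nat -> P j -> P l -> j <> l -> disjoint (I j) (I l).

Lemma Lrec_spec (P : nat -> Prop) I m : Ldisj P I m -> forall x,
  (exists j, (j < m)%nat /\ P j /\ fst (I j) < x < snd (I j) /\
     flips_prod (Lrec P I m) x = fst (I j) + snd (I j) - x) \/
  ((forall j, (j < m)%nat -> P j -> ~ (fst (I j) < x < snd (I j))) /\ flips_prod (Lrec P I m) x = x).
Proof.
  intros D x. induction m as [|m IH].
  - right. split. intros; lia. reflexivity.
  - assert (D' : Ldisj P I m) by (intros j l ? ? ? ? ?; apply D; auto; lia).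
    specialize (IH D'). unfold flips_prod in *. cbn [Lrec]. rewrite fold_right_app.
    destruct (excluded_middle_informative (P m)) as [Pm|Pm]; cbn [fold_right].
    + destruct IH as [[j [Hj [Pj [Hx Hv]]]] | [Hn Hv]]; rewrite Hv.
      * left. exists j. repeat split; try lia; auto; try lra.
        unfold flip. destruct (Rlt_dec (fst (I m)) (fst (I j) + snd (I j) - x)); auto.
        destruct (Rlt_dec (fst (I j) + snd (I j) - x) (snd (I m))); auto.
        exfalso. apply (D m j ltac:(lia) ltac:(lia) Pm Pj ltac:(lia) (fst (I j) + snd (I j) - x)).
        split; split; auto; lra.
      * unfold flip. destruct (Rlt_dec (fst (I m)) x) as [A|A];
          [destruct (Rlt_dec x (snd (I m))) as [B|B]|].
        -- left. exists m. repeat split; auto; lia.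
        -- right. split; auto. intros j Hj Pj. destruct (Nat.eq_dec j m). subst; lra. apply Hn; auto; lia.
        -- right. split; auto. intros j Hj Pj. destruct (Nat.eq_dec j m). subst; lra. apply Hn; auto; lia.
    + destruct IH as [[j [Hj [Pj [Hx Hv]]]] | [Hn Hv]]; rewrite Hv.
      * left. exists j. split; [lia|]. split; auto.
      * right. split; auto. intros j Hj Pj. destruct (Nat.eq_dec j m). subst; contradiction. apply Hn; auto; lia.
Qed.

Lemma Lrec_invol (P : nat -> Prop) I m : Ldisj P I m -> forall x, flips_prod (Lrec P I m) (flips_prod (Lrec P I m) x) = x.
Proof.
  intros D x. destruct (Lrec_spec P I m D x) as [[j [Hj [Pj [Hx Hv]]]] | [Hn Hv]]; rewrite Hv.
  - destruct (Lrec_spec P I m D (fst (I j) + snd (I j) - x)) as [[l [Hl [Pl [Hy Hw]]]] | [Hn Hw]].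
    + destruct (Nat.eq_dec l j). subst; rewrite Hw; ring.
      exfalso. apply (D l j Hl Hj Pl Pj n (fst (I j) + snd (I j) - x)). split; auto; lra.
    + exfalso; apply (Hn j Hj Pj); lra.
  - rewrite Hv; auto.
Qed.

Lemma Lrec_flip (P : nat -> Prop) I m : Ldisj P I m -> (forall j, (j < m)%nat -> P j -> valid_interval (I j)) ->
  flip_product (flips_prod (Lrec P I m)) /\ bijX (flips_prod (Lrec P I m)).
Proof.
  intros D V. split.
  - exists (Lrec P I m). split; auto. apply Forall_forall. intros q Hq.
    destruct (Lrec_in P I m q Hq) as [j [Hj [Pj E]]]. subst; auto.
  - apply invol_bij; [|apply Lrec_invol; auto].
    intros x Hx. destruct (Lrec_spec P I m D x) as [[j [Hj [Pj [Hx' Hv]]]] | [Hn Hv]]; rewrite Hv; auto.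
    destruct (V j Hj Pj) as [V1 [V2 V3]]. unfold inX. lra.
Qed.

Theorem proposition2p4 (h : R -> R) (Hh : IET_bowtie h) :
  exists (f g r s sigma tau : R -> R),
    IET_plus_rc f /\ IET_plus_rc g /\
    flip_product r /\ flip_product s /\
    fin_supp_perm sigma /\ fin_supp_perm tau /\
    (forall x, inX x -> h x = r (sigma (f x))) /\
    (forall x, inX x -> h x = g (tau (s x))).
Proof.
  destruct Hh as [Bh [n [a [P H]]]].
  pose (rev := fun i => exists c, forall x, a i < x < a (S i) -> h x = - x + c).
  pose (cr := fun i => epsilon (inhabits 0) (fun c => forall x, a i < x < a (S i) -> h x = - x + c)).
  assert (Hcr : forall i, rev i -> forall x, a i < x < a (S i) -> h x = - x + cr i).
  { intros i Ri. unfold cr. apply epsilon_spec. exact Ri. }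
  assert (Pin : forall i y, (i < n)%nat -> a i < y < a (S i) -> inX y).
  { intros i y Hi Hy. pose proof (part_bounds n a P i ltac:(lia)).
    pose proof (part_bounds n a P (S i) ltac:(lia)). unfold inX. lra. }
  assert (Hlt : forall i, (i < n)%nat -> a i < a (S i)).
  { intros i Hi. apply (part_mono n a P); lia. }
  destruct Bh as [Mh [Ih Sh]].
  pose (I1 := fun i => (cr i - a (S i), cr i - a i)).
  pose (I2 := fun i => (a i, a (S i))).
  assert (Back : forall j y, (j < n)%nat -> rev j -> fst (I1 j) < y < snd (I1 j) ->
            a j < cr j - y < a (S j) /\ h (cr j - y) = y).
  { intros j y Hj Rj Hy. simpl in Hy. assert (a j < cr j - y < a (S j)) by lra.
    split; auto. rewrite (Hcr j Rj) by auto. ring. }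
  assert (D1 : Ldisj rev I1 n).
  { intros j l Hj Hl Pj Pl Hne y [Hy1 Hy2].
    destruct (Back j y Hj Pj Hy1) as [A1 B1]. destruct (Back l y Hl Pl Hy2) as [A2 B2].
    assert (cr j - y = cr l - y).
    { apply Ih. apply (Pin j); auto. apply (Pin l); auto. rewrite B1, B2; auto. }
    apply Hne. apply (piece_unique n a P j l (cr j - y)); auto. rewrite H0; auto. }
  assert (D2 : Ldisj rev I2 n).
  { intros j l Hj Hl Pj Pl Hne y [Hy1 Hy2]. apply Hne. apply (piece_unique n a P j l y); auto. }
  assert (V1 : forall j, (j < n)%nat -> rev j -> valid_interval (I1 j)).
  { intros j Hj Rj. pose proof (Hlt j Hj). unfold valid_interval; simpl. split; [|split].
    - destruct (Rlt_or_le (cr j - a (S j)) 0) as [N|N]; auto. exfalso.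
      destruct (Rlt_or_le (cr j) (a j)) as [M|M].
      + set (x := (a j + a (S j)) / 2). assert (Hx : a j < x < a (S j)) by (unfold x; lra).
        pose proof (Mh x (Pin j x Hj Hx)) as Q. rewrite (Hcr j Rj x Hx) in Q. unfold inX in Q. lra.
      + set (x := (cr j + a (S j)) / 2). assert (Hx : a j < x < a (S j)) by (unfold x; lra).
        pose proof (Mh x (Pin j x Hj Hx)) as Q. rewrite (Hcr j Rj x Hx) in Q. unfold inX in Q.
        unfold x in Q; lra.
    - lra.
    - destruct (Rlt_or_le 1 (cr j - a j)) as [N|N]; auto. exfalso.
      destruct (Rlt_or_le (cr j - 1) (a (S j))) as [M|M].
      + set (x := (a j + (cr j - 1)) / 2). assert (Hx : a j < x < a (S j)) by (unfold x; lra).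
        pose proof (Mh x (Pin j x Hj Hx)) as Q. rewrite (Hcr j Rj x Hx) in Q. unfold inX in Q.
        unfold x in Q; lra.
      + set (x := (a j + a (S j)) / 2). assert (Hx : a j < x < a (S j)) by (unfold x; lra).
        pose proof (Mh x (Pin j x Hj Hx)) as Q. rewrite (Hcr j Rj x Hx) in Q. unfold inX in Q.
        unfold x in Q; lra. }
  assert (V2 : forall j, (j < n)%nat -> rev j -> valid_interval (I2 j)).
  { intros j Hj Rj. pose proof (Hlt j Hj). pose proof (part_bounds n a P j ltac:(lia)).
    pose proof (part_bounds n a P (S j) ltac:(lia)). unfold valid_interval; simpl. lra. }
  destruct (Lrec_flip rev I1 n D1 V1) as [Fr Br].
  destruct (Lrec_flip rev I2 n D2 V2) as [Fs Bs].
  set (r := flips_prod (Lrec rev I1 n)) in *.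
  set (s := flips_prod (Lrec rev I2 n)) in *.
  assert (Ir : forall x, r (r x) = x) by (apply Lrec_invol; auto).
  assert (Is : forall x, s (s x) = x) by (apply Lrec_invol; auto).
  assert (K1 : IET_plus (fun x => r (h x))).
  { split. apply bijX_comp; auto. split; auto.
    exists n, a. split; auto. intros i Hi.
    destruct (excluded_middle_informative (rev i)) as [Ri|Ri].
    - exists (cr i - a i - a (S i)). intros x Hx.
      destruct (Lrec_spec rev I1 n D1 (h x)) as [[j [Hj [Pj [Hy Hv]]]] | [Hn Hv]].
      + destruct (Back j (h x) Hj Pj Hy) as [A B].
        assert (cr j - h x = x) by (apply Ih; auto; [apply (Pin j); auto | apply (Pin i); auto]).
        assert (j = i) by (apply (piece_unique n a P j i x); auto; rewrite <- H0; auto).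
        subst j. unfold r. rewrite Hv. simpl. rewrite (Hcr i Ri x Hx). ring.
      + exfalso. apply (Hn i Hi Ri). simpl. rewrite (Hcr i Ri x Hx). lra.
    - destruct (H i Hi) as [c [Hc|Hc]]; [|exfalso; apply Ri; exists c; auto].
      exists c. intros x Hx.
      destruct (Lrec_spec rev I1 n D1 (h x)) as [[j [Hj [Pj [Hy Hv]]]] | [Hn Hv]].
      + destruct (Back j (h x) Hj Pj Hy) as [A B].
        assert (cr j - h x = x) by (apply Ih; auto; [apply (Pin j); auto | apply (Pin i); auto]).
        assert (j = i) by (apply (piece_unique n a P j i x); auto; rewrite <- H0; auto).
        subst j. contradiction.
      + unfold r. rewrite Hv. auto. }
  assert (K2 : IET_plus (fun x => h (s x))).
  { split. apply bijX_comp; auto. split; auto.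
    exists n, a. split; auto. intros i Hi.
    destruct (excluded_middle_informative (rev i)) as [Ri|Ri].
    - exists (cr i - a i - a (S i)). intros x Hx.
      destruct (Lrec_spec rev I2 n D2 x) as [[j [Hj [Pj [Hy Hv]]]] | [Hn Hv]].
      + simpl in Hy. assert (j = i) by (apply (piece_unique n a P j i x); auto).
        subst j. unfold s. rewrite Hv. simpl. rewrite (Hcr i Ri) by lra. ring.
      + exfalso. apply (Hn i Hi Ri). simpl. lra.
    - destruct (H i Hi) as [c [Hc|Hc]]; [|exfalso; apply Ri; exists c; auto].
      exists c. intros x Hx.
      destruct (Lrec_spec rev I2 n D2 x) as [[j [Hj [Pj [Hy Hv]]]] | [Hn Hv]].
      + simpl in Hy. assert (j = i) by (apply (piece_unique n a P j i x); auto).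
        subst j. contradiction.
      + unfold s. rewrite Hv. auto. }
  destruct (rc_decomp _ K1) as [Rf [[sigma [Hsig Esig]] _]].
  destruct (rc_decomp _ K2) as [Rg [_ [tau [Htau Etau]]]].
  exists (frc (fun x => r (h x))), (frc (fun x => h (s x))), r, s, sigma, tau.
  split; [exact Rf|]. split; [exact Rg|]. split; [exact Fr|]. split; [exact Fs|].
  split; [exact Hsig|]. split; [exact Htau|]. split.
  - intros x Hx. rewrite <- Esig by auto. rewrite Ir. auto.
  - intros x Hx. rewrite <- Etau by (apply (proj1 Bs); auto). rewrite Is. auto.
Qed.
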